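(* Let $i\geq 1$ and $n\geq 1$. Let $T(i,n)$ be the set of pairs $(L_1,L_2)$ of walks of length $n$ with steps $(1,1)$ and $(1,-1)$, where $L_1$ starts at $(0,0)$ and $L_2$ starts at $(0,2i)$, such that $L_1$ and $L_2$ share no common point before they reach a common ending point at $x=n$. Let $P(i,n)$ be the set of lattice paths of length $2n$ with steps $(1,1)$ and $(1,-1)$ starting at $(0,2i)$ that end on the $x$-axis and do not touch the $x$-axis at any earlier point (hence never go below it). Then there exists a bijection between $T(i,n)$ and $P(i,n)$. *)

(* Defs.v *)
From mathcomp Require Import all_boot all_order all_algebra.
Set Implicit Arguments. Unset Strict Implicit. Unset Printing Implicit Defensive.
Import Order.TTheory GRing.Theory Num.Theory.
Local Open Scope ring_scope.

(* A walk is a sequence of steps: true = (1,1), false = (1,-1). *)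
Definition step (b : bool) : int := if b then 1 else -1.

Definition height (h0 : int) (s : seq bool) (k : nat) : int :=
  h0 + \sum_(j < k) step (nth false s j).

Definition inTpair (i n : nat) (p : n.-tuple bool * n.-tuple bool) : bool :=
  [forall k : 'I_n, height 0 p.1 k != height (2 * i)%N%:Z p.2 k]
  && (height 0 p.1 n == height (2 * i)%N%:Z p.2 n).

Definition inPpath (i n : nat) (s : (2 * n).-tuple bool) : bool :=
  [forall k : 'I_(2 * n), height (2 * i)%N%:Z s k != 0]
  && (height (2 * i)%N%:Z s (2 * n) == 0).

Arguments inTpair i n p : clear implicits.
Arguments inPpath i n s : clear implicits.

(* Main.v *)
Require Import Defs.
From mathcomp Require Import all_boot all_order all_algebra zify ring lra.
Set Implicit Arguments. Unset Strict Implicit. Unset Printing Implicit Defensive.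
Import Order.TTheory GRing.Theory Num.Theory.
Local Open Scope ring_scope.

Definition G (a b : seq bool) (n : nat) : seq bool :=
  mkseq (fun j => if odd j then ~~ nth false a j./2 else nth false b j./2) (2 * n).
Definition HA (s : seq bool) (n : nat) := mkseq (fun k => ~~ nth false s (k.*2.+1)) n.
Definition HB (s : seq bool) (n : nat) := mkseq (fun k => nth false s (k.*2)) n.

Lemma GH s n : size s = (2 * n)%N -> G (HA s n) (HB s n) n = s.
Proof.
move=> hs; apply: (@eq_from_nth _ false); first by rewrite size_mkseq hs.
move=> j; rewrite size_mkseq => hj; rewrite nth_mkseq //.
have hj2 : (j./2 < n)%N by rewrite ltn_half_double -mul2n.
case: ifP => ho; rewrite nth_mkseq // ?negbK; congr nth;
  by rewrite -[RHS](odd_double_half j) ho.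
Qed.

Lemma HAG a b n : size a = n -> HA (G a b n) n = a.
Proof.
move=> ha; apply: (@eq_from_nth _ false); first by rewrite size_mkseq ha.
move=> k; rewrite size_mkseq => hk; rewrite !nth_mkseq //; last first.
  rewrite -mul2n; lia.
by rewrite /= odd_double /= uphalf_double negbK.
Qed.

Lemma HBG a b n : size b = n -> HB (G a b n) n = b.
Proof.
move=> ha; apply: (@eq_from_nth _ false); first by rewrite size_mkseq ha.
move=> k; rewrite size_mkseq => hk; rewrite !nth_mkseq //; last first.
  rewrite -mul2n; lia.
by rewrite odd_double doubleK.
Qed.

Lemma sumG a b n k : (k <= n)%N ->
  \sum_(j < k.*2) step (nth false (G a b n) j) =
  \sum_(j < k) step (nth false b j) - \sum_(j < k) step (nth false a j).
Proof.
elim: k => [|k IH] hk; first by rewrite !big_ord0 subr0.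
rewrite doubleS !big_ord_recr /= IH; last by lia.
rewrite !nth_mkseq; try (rewrite -mul2n; lia).
rewrite /= odd_double /= uphalf_double doubleK.
case: (nth false a k); case: (nth false b k); rewrite /step /=; ring.
Qed.

Lemma sum_par s m : exists c : int, \sum_(j < m) step (nth false s j) = m%:Z - 2 * c.
Proof.
elim: m => [|m [c IH]]; first by exists 0; rewrite big_ord0 /=; ring.
rewrite big_ord_recr /= IH; case: (nth false s m); rewrite /step.
  by exists c; lia.
by exists (c + 1); lia.
Qed.

Lemma heightG i a b n k : (k <= n)%N ->
  height (2 * i)%N%:Z (G a b n) k.*2 = height (2 * i)%N%:Z b k - height 0 a k.
Proof. move=> hk; rewrite /height sumG //; ring. Qed.

Lemma heightOdd i s m : height (2 * i)%N%:Z s m.*2.+1 != 0.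
Proof.
rewrite /height; have [c ->] := sum_par s m.*2.+1.
apply/eqP => h; rewrite -mul2n in h; lia.
Qed.

Section Main.
Variables i n : nat.

Lemma size_G (p : n.-tuple bool * n.-tuple bool) : size (G p.1 p.2 n) == (2 * n)%N.
Proof. by rewrite size_mkseq. Qed.
Lemma size_HA (s : (2 * n).-tuple bool) : size (HA s n) == n.
Proof. by rewrite size_mkseq. Qed.
Lemma size_HB (s : (2 * n).-tuple bool) : size (HB s n) == n.
Proof. by rewrite size_mkseq. Qed.

Definition tG p : (2 * n).-tuple bool := Tuple (size_G p).
Definition tH s : n.-tuple bool * n.-tuple bool := (Tuple (size_HA s), Tuple (size_HB s)).

Lemma tHG p : tH (tG p) = p.
Proof.
case: p => a b; congr pair; apply: val_inj => /=.
  by rewrite HAG // size_tuple.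
by rewrite HBG // size_tuple.
Qed.

Lemma tGH s : tG (tH s) = s.
Proof. by apply: val_inj => /=; rewrite GH // size_tuple. Qed.

Lemma PG p : inTpair i n p -> inPpath i n (tG p).
Proof.
case: p => a b; rewrite /inTpair /inPpath /= => /andP [/forallP hk he].
apply/andP; split.
  apply/forallP => k; have := odd_double_half k.
  case: (odd k) => /= e; rewrite -e; first by rewrite add1n heightOdd.
  have k2 : (k./2 < n)%N by rewrite ltn_half_double -mul2n.
  rewrite add0n heightG; last exact: ltnW.
  by have := hk (Ordinal k2); rewrite subr_eq0 eq_sym.
by rewrite [X in height _ _ X]mul2n heightG // subr_eq0 eq_sym.
Qed.

Lemma TH s : inPpath i n s -> inTpair i n (tH s).
Proof.
rewrite -{1}(tGH s); set p := tH s; case: p => a b.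
rewrite /inTpair /inPpath /= => /andP [/forallP hk he].
apply/andP; split.
  apply/forallP => k.
  have k2 : (k.*2 < 2 * n)%N by rewrite -mul2n ltn_pmul2l.
  have := hk (Ordinal k2); rewrite /= heightG; last exact: ltnW.
  by rewrite subr_eq0 eq_sym.
by move: he; rewrite [X in height _ _ X]mul2n heightG // subr_eq0 eq_sym.
Qed.

End Main.

Theorem proposition4p1 (i n : nat) (hi : (1 <= i)%N) (hn : (1 <= n)%N) :
  exists f : {p : n.-tuple bool * n.-tuple bool | inTpair i n p} ->
             {s : (2 * n).-tuple bool | inPpath i n s},
    bijective f.
Proof.
exists (fun x => exist _ (tG (val x)) (PG (valP x))).
exists (fun y => exist _ (tH (val y)) (TH (valP y))).
  by move=> x; apply: val_inj; rewrite /= tHG.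
by move=> y; apply: val_inj; rewrite /= tGH.
Qed.
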